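(* Let $m,n$ be non-negative integers. For $y\in\mathbb{R}$ define \[ R_{m,n}(y)=\int_{-1}^1U_n(x)\,U_{n+m}(x+y)\sqrt{1-x^2}\,dx . \] Then \[ R_{m,n}(y)=\dfrac{\pi\,\Gamma(m+n+1)}{\Gamma(m+1)\Gamma(n+1)}2^{m-1}y^m\ {}_4F_3\left(\begin{array}{c}-\frac{m}{2},\frac{1-m}{2},\frac{1-m}{2},\frac{2-m}{2}\\ 1-m,\ -m-n,\ n+2\end{array};\dfrac{4}{y^2}\right). \]
   Context: $U_n$ is the Chebyshev polynomial of the second kind, $U_n(\cos\theta)=\frac{\sin((n+1)\theta)}{\sin\theta}$. ${}_4F_3$ is the generalized hypergeometric series $\sum_k\frac{(a_1)_k\cdots(a_4)_k}{(b_1)_k(b_2)_k(b_3)_k}\frac{z^k}{k!}$ with $(a)_k$ the Pochhammer symbol; here it terminates (at the first upper parameter that is a non-positive integer), so $y^m\,{}_4F_3(\dots;4/y^2)$ is a polynomial in $y$ and the right-hand side is understood as this polynomial. *)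

(* Defs.v *)
From Stdlib Require Import Reals Arith Factorial.
From Coquelicot Require Import Coquelicot.
Open Scope R_scope.

(* Chebyshev polynomials of the second kind, as polynomial functions on R:
   U_0 = 1, U_1 = 2x, U_(n+2) = 2x U_(n+1) - U_n
   (equivalently U_n(cos t) = sin((n+1)t)/sin t). *)
Fixpoint chebU (n : nat) (x : R) : R :=
  match n with
  | O => 1
  | S n' =>
      match n' with
      | O => 2 * x
      | S n'' => 2 * x * chebU n' x - chebU n'' x
      end
  end.

Fixpoint poch (a : R) (k : nat) : R :=
  match k with
  | O => 1
  | S k' => poch a k' * (a + INR k')
  end.

Definition hyp43_coef (a1 a2 a3 a4 b1 b2 b3 : R) (k : nat) : R :=
  poch a1 k * poch a2 k * poch a3 k * poch a4 k
  / (poch b1 k * poch b2 k * poch b3 k * INR (fact k)).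

(* The terminating series  y^m * 4F3(a;b; 4/y^2), read as the polynomial in y
   sum_(k=0..N) coef_k * 4^k * y^(m-2k), where N is the termination index. *)
Definition ym_hyp43_poly (m N : nat) (a1 a2 a3 a4 b1 b2 b3 y : R) : R :=
  sum_f_R0 (fun k => hyp43_coef a1 a2 a3 a4 b1 b2 b3 k * 4 ^ k * y ^ (m - 2 * k)) N.

(* Termination index for the upper parameters -m/2, (1-m)/2, (1-m)/2, (2-m)/2:
   m = 0: the parameter -m/2 = 0 gives N = 0;
   m even >= 2: the parameter (2-m)/2 = -(m/2 - 1) gives N = m/2 - 1;
   m odd: the parameter (1-m)/2 = -(m-1)/2 gives N = (m-1)/2.
   In all cases N = floor((m-1)/2) (with 0 for m = 0). *)
Definition term_index (m : nat) : nat := Nat.div2 (m - 1).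

Definition Rmn (m n : nat) (y : R) : R :=
  RInt (fun x => chebU n x * chebU (n + m) (x + y) * sqrt (1 - x ^ 2)) (-1) 1.

(* Main.v *)
Require Import Defs.
From Stdlib Require Import Reals Arith Factorial Lra Lia.
From Coquelicot Require Import Coquelicot.
Open Scope R_scope.

Ltac req := match goal with |- ?a = ?b => change (@eq R a b) end; try change RinvImpl.Rinv with Rinv.

Lemma chebU_SS n x : chebU (S (S n)) x = 2 * x * chebU (S n) x - chebU n x.
Proof. reflexivity. Qed.



Lemma U_sin_aux n t : chebU n (cos t) * sin t = sin (INR (S n) * t)
  /\ chebU (S n) (cos t) * sin t = sin (INR (S (S n)) * t).
Proof.
  induction n as [|n [IH1 IH2]].
  - simpl. split. rewrite Rmult_1_l, Rmult_1_l; reflexivity.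
    replace ((1+1) * t) with (2 * t) by ring. rewrite sin_2a. ring.
  - split; [exact IH2|].
    rewrite chebU_SS.
    replace (INR (S (S (S n))) * t) with (INR (S (S n)) * t + t) by (rewrite !S_INR; ring).
    replace ((2 * cos t * chebU (S n) (cos t) - chebU n (cos t)) * sin t)
      with (2 * cos t * (chebU (S n) (cos t) * sin t) - chebU n (cos t) * sin t) by ring.
    rewrite IH1, IH2.
    replace (INR (S n) * t) with (INR (S (S n)) * t - t) by (rewrite !S_INR; ring).
    rewrite sin_plus, sin_minus. ring.
Qed.

Lemma U_sin n t : chebU n (cos t) * sin t = sin (INR (S n) * t).
Proof. apply U_sin_aux. Qed.

Lemma sin_nPI k : sin (INR k * PI) = 0.
Proof.
  induction k. simpl. rewrite Rmult_0_l; apply sin_0.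
  rewrite S_INR, Rmult_plus_distr_r, Rmult_1_l, neg_sin, IHk. ring.
Qed.

Lemma cmul (f g : R -> R) x : continuous f x -> continuous g x -> continuous (fun x => f x * g x) x.
Proof. intros; apply (continuous_mult f g x); auto. Qed.
Lemma cplus (f g : R -> R) x : continuous f x -> continuous g x -> continuous (fun x => f x + g x) x.
Proof. intros; apply (continuous_plus f g x); auto. Qed.
Lemma cminus (f g : R -> R) x : continuous f x -> continuous g x -> continuous (fun x => f x - g x) x.
Proof. intros; apply (continuous_minus f g x); auto. Qed.
Lemma cconst (c : R) x : continuous (fun _ : R => c) x.
Proof. apply continuous_const. Qed.
Lemma cid x : continuous (fun x : R => x) x.
Proof. apply continuous_id. Qed.

Lemma chebU_cont n x : continuous (chebU n) x.
Proof.
  assert (H : continuous (chebU n) x /\ continuous (chebU (S n)) x).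
  { induction n as [|n [IH1 IH2]].
    - split. apply cconst. change (continuous (fun x => 2 * x) x). apply cmul. apply cconst. apply cid.
    - split; auto. change (continuous (fun x => 2 * x * chebU (S n) x - chebU n x) x).
      apply cminus; [apply cmul; [apply cmul; [apply cconst|apply cid]|]|]; auto. }
  apply H.
Qed.

Lemma W_cont x : continuous (fun x => sqrt (1 - x ^ 2)) x.
Proof. apply continuous_sqrt_comp. apply cminus. apply cconst.
  change (continuous (fun x => x * (x * 1)) x). apply cmul. apply cid. apply cmul. apply cid. apply cconst. Qed.

Lemma base_int j :
  RInt (fun x => chebU j x * sqrt (1 - x ^ 2)) (-1) 1 = match j with O => PI / 2 | _ => 0 end.
Proof.
  set (f := fun x => chebU j x * sqrt (1 - x ^ 2)).
  assert (Hc : forall x, continuous f x).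
  { intros x. unfold f. apply cmul. apply chebU_cont. apply W_cont. }
  rewrite <- cos_PI, <- cos_0.
  rewrite <- (RInt_comp f cos (fun t => - sin t) PI 0).
  2:{ intros; apply Hc. }
  2:{ intros x _. split. auto_derive; auto. ring.
      apply (@ex_derive_continuous R_AbsRing R_NormedModule). auto_derive; auto. }
  set (g := fun t => - (sin t * sin (INR (S j) * t))).
  rewrite (RInt_ext _ g).
  2:{ intros t Ht. rewrite Rmin_right, Rmax_left in Ht by (pose proof PI_RGT_0; lra).
      unfold f, g. change (scal (- sin t) (chebU j (cos t) * sqrt (1 - cos t ^ 2))) with (- sin t * (chebU j (cos t) * sqrt (1 - cos t ^ 2))).
      assert (Hs : 0 < sin t) by (apply sin_gt_0; lra).
      replace (1 - cos t ^ 2) with (sin t ^ 2) by (pose proof (sin2_cos2 t); unfold Rsqr in *; simpl; nra).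
      rewrite sqrt_pow2 by lra. rewrite <- U_sin. change (@eq R (- sin t * (chebU j (cos t) * sin t)) (- (sin t * (chebU j (cos t) * sin t)))). ring. }
  assert (Hgc : forall x, continuous g x).
  { intros x. apply (@ex_derive_continuous R_AbsRing R_NormedModule). unfold g. auto_derive; auto. }
  destruct j as [|j].
  - set (F := fun t => - (t / 2 - sin (2 * t) / 4)).
    assert (HF : is_RInt g PI 0 (minus (F 0) (F PI))).
    { apply (@is_RInt_derive R_CompleteNormedModule). 2: intros; apply Hgc.
      intros x _. unfold F, g. auto_derive; auto.
      rewrite cos_2a_sin. req. change (INR 1) with 1. replace (1 * x) with x by ring. field. }
    rewrite (is_RInt_unique _ _ _ _ HF). unfold F, minus, plus, opp; simpl.
    rewrite Rmult_0_r, sin_0, sin_2PI. req. field.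
  - set (r := INR (S j)).
    assert (Hr : 0 < r) by (apply lt_0_INR; lia).
    set (F := fun t => - (sin (r * t) / r - sin ((r + 2) * t) / (r + 2)) / 2).
    assert (HF : is_RInt g PI 0 (minus (F 0) (F PI))).
    { apply (@is_RInt_derive R_CompleteNormedModule). 2: intros; apply Hgc.
      intros x _. unfold F, g. auto_derive; auto.
      replace (INR (S (S j))) with (r + 1) by (unfold r; rewrite (S_INR (S j)); ring).
      replace (r * x) with ((r + 1) * x - x) by ring.
      replace ((r + 2) * x) with ((r + 1) * x + x) by ring.
      rewrite cos_minus, cos_plus. req. field. lra. }
    rewrite (is_RInt_unique _ _ _ _ HF). unfold F, minus, plus, opp; simpl.
    rewrite !Rmult_0_r, sin_0.
    replace ((r + 2) * PI) with (INR (S (S (S j))) * PI) by (unfold r; rewrite !S_INR; ring).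
    rewrite sin_nPI. unfold r in *. rewrite sin_nPI. req. field. split; lra.
Qed.

Definition H (j k n : nat) : R :=
  INR (fact (k + j)) * INR (fact (n + k + j + 1)) * INR (n + 1) /
  (INR (fact k) * INR (fact j) * INR (fact (j + 1)) * INR (fact (n + k + 1))).

Ltac natnorm := repeat (rewrite ?Nat.add_succ_l, ?Nat.add_succ_r, ?Nat.add_0_r, ?Nat.add_0_l).
Ltac addpos := repeat match goal with v : nat |- _ =>
  lazymatch goal with _ : 0 <= INR v |- _ => fail | _ => pose proof (pos_INR v) end end.
Ltac nz := addpos; repeat split; try apply INR_fact_neq_0; lra.
Ltac hsolve := unfold H; natnorm; rewrite ?fact_simpl; rewrite ?mult_INR, ?S_INR, ?plus_INR; simpl INR;
  field; nz.

Lemma H_sss a b c : H (S a) (S b) (S c) = H a (S b) (S c) + (H (S a) b (S (S c)) - H (S a) b (S c)) + H (S a) (S b) c.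
Proof. hsolve. Qed.
Lemma H_ss0 a b : H (S a) (S b) 0 = H a (S b) 0 + (H (S a) b 1 - H (S a) b 0).
Proof. hsolve. Qed.
Lemma H_s0s a c : H (S a) 0 (S c) = H a 0 (S c) + H (S a) 0 c.
Proof. hsolve. Qed.
Lemma H_s00 a : H (S a) 0 0 = H a 0 0.
Proof. hsolve. Qed.
Lemma H_0ss b c : H 0 (S b) (S c) = (H 0 b (S (S c)) - H 0 b (S c)) + H 0 (S b) c.
Proof. hsolve. Qed.
Lemma H_0s0 b : H 0 (S b) 0 = (H 0 b 1 - H 0 b 0).
Proof. hsolve. Qed.

Definition c (m n k : nat) : R :=
  if (2 * k + 1 <=? m)%nat then 2 ^ (m - 2 * k) * H (m - (2 * k + 1)) k n
  else if (andb (m =? 0)%nat (k =? 0)%nat) then 1 else 0.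

Definition t (y : R) (m n k : nat) : R := c m n k * y ^ (m - 2 * k).

Lemma tF y M j k n : M = (2 * k + 1 + j)%nat -> t y M n k = H j k n * (2 * y) ^ (S j).
Proof.
  intros ->. unfold t, c.
  replace (2 * k + 1 <=? 2 * k + 1 + j)%nat with true by (symmetry; apply Nat.leb_le; lia).
  replace (2 * k + 1 + j - (2 * k + 1))%nat with j by lia.
  replace (2 * k + 1 + j - 2 * k)%nat with (S j) by lia.
  rewrite Rpow_mult_distr. ring.
Qed.

Lemma tZ y M n k : (M < 2 * k + 1)%nat -> (M <> 0 \/ k <> 0)%nat -> t y M n k = 0.
Proof.
  intros H1 H2. unfold t, c.
  replace (2 * k + 1 <=? M)%nat with false by (symmetry; apply Nat.leb_gt; lia).
  destruct (M =? 0)%nat eqn:E1; destruct (k =? 0)%nat eqn:E2; simpl;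
  try (rewrite Nat.eqb_eq in E1, E2; lia); ring.
Qed.

Lemma t00 y n : t y 0 n 0 = 1.
Proof. unfold t, c. simpl. ring. Qed.

Definition sh y a b k := match k with O => 0 | S k' => t y a b k' end.
Definition tm y m n k := match n with O => 0 | S n' => t y m n' k end.

Lemma term y m' n k :
  t y (S (S m')) n k = 2 * y * t y (S m') n k + sh y m' (S n) k + tm y (S (S m')) n k - sh y m' n k.
Proof.
  destruct (le_lt_dec (2 * k + 1) (S (S m'))) as [Hr|Hr].
  - remember (S (S m') - (2 * k + 1))%nat as j eqn:Ej.
    rewrite (tF y _ j k n) by lia.
    destruct j as [|j'].
    +
      destruct k as [|k']; [lia|].
      rewrite (tZ y (S m')) by lia.
      unfold sh. rewrite (tF y m' 0 k' (S n)) by lia. rewrite (tF y m' 0 k' n) by lia.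
      destruct n as [|n'].
      * unfold tm. rewrite H_0s0. ring.
      * unfold tm. rewrite (tF y _ 0 (S k') n') by lia. rewrite H_0ss. ring.
    + rewrite (tF y (S m') j' k n) by lia.
      destruct k as [|k'].
      * unfold sh. destruct n as [|n']; unfold tm.
        -- rewrite H_s00. simpl pow. ring.
        -- rewrite (tF y _ (S j') 0 n') by lia. rewrite H_s0s. simpl pow. ring.
      * unfold sh. rewrite (tF y m' (S j') k' (S n)) by lia. rewrite (tF y m' (S j') k' n) by lia.
        destruct n as [|n']; unfold tm.
        -- rewrite H_ss0. simpl pow. ring.
        -- rewrite (tF y _ (S j') (S k') n') by lia. rewrite H_sss. simpl pow. ring.
  - rewrite (tZ y (S (S m'))) by lia. rewrite (tZ y (S m')) by lia.
    assert (Htm : tm y (S (S m')) n k = 0).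
    { destruct n; unfold tm; [reflexivity|]. apply tZ; lia. }
    rewrite Htm.
    destruct k as [|k']; [lia|]. unfold sh.
    destruct (Nat.eq_dec m' 0) as [->|Hm]; destruct (Nat.eq_dec k' 0) as [->|Hk].
    + rewrite !t00. ring.
    + rewrite !(tZ y 0) by lia. ring.
    + rewrite !(tZ y m') by lia. ring.
    + rewrite !(tZ y m') by lia. ring.
Qed.

Definition P y m n := sum_f_R0 (fun k => t y m n k) m.

Lemma sum_ext_zero f K L : (K <= L)%nat -> (forall k, (K < k <= L)%nat -> f k = 0) ->
  sum_f_R0 f L = sum_f_R0 f K.
Proof.
  intros HKL Hz. induction L.
  - replace K with 0%nat by lia. reflexivity.
  - destruct (Nat.eq_dec K (S L)) as [->|HK]; [reflexivity|].
    simpl. rewrite IHL by (try lia; intros; apply Hz; lia). rewrite Hz by lia. ring.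
Qed.

Lemma P_ext y m n L : (m <= L)%nat -> P y m n = sum_f_R0 (fun k => t y m n k) L.
Proof.
  intros H. unfold P. symmetry. apply sum_ext_zero; auto.
  intros k Hk. apply tZ; lia.
Qed.

Lemma sum_shift f L : sum_f_R0 f (S L) = f 0%nat + sum_f_R0 (fun k => f (S k)) L.
Proof.
  induction L. simpl. ring. cbn [sum_f_R0] in *. rewrite IHL. ring.
Qed.

Lemma sum_lin a f g h u L :
  sum_f_R0 (fun k => a * f k + g k + h k - u k) L =
  a * sum_f_R0 f L + sum_f_R0 g L + sum_f_R0 h L - sum_f_R0 u L.
Proof. induction L; cbn [sum_f_R0]; [ring|]. rewrite IHL. ring. Qed.

Lemma sum_zero L : sum_f_R0 (fun _ => 0) L = 0.
Proof. induction L; cbn [sum_f_R0]; [ring|]. rewrite IHL. ring. Qed.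

Lemma sh_sum y a b L : (a <= L)%nat -> sum_f_R0 (sh y a b) (S L) = P y a b.
Proof.
  intros H. rewrite sum_shift. simpl sh at 1. rewrite Rplus_0_l.
  rewrite (P_ext y a b L H). reflexivity.
Qed.

Lemma P2 y m' n :
  P y (S (S m')) n = 2 * y * P y (S m') n + P y m' (S n)
     + match n with O => 0 | S n' => P y (S (S m')) n' end - P y m' n.
Proof.
  unfold P at 1.
  rewrite (sum_eq _ (fun k => 2 * y * t y (S m') n k + sh y m' (S n) k + tm y (S (S m')) n k - sh y m' n k))
    by (intros; apply term).
  rewrite sum_lin.
  rewrite (P_ext y (S m') n (S (S m'))) by lia.
  rewrite !sh_sum by lia.
  destruct n as [|n'].
  - unfold tm. rewrite sum_zero. reflexivity.
  - unfold P at 3. unfold tm. reflexivity.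
Qed.

Lemma P0 y n : P y 0 n = 1.
Proof. unfold P. simpl. apply t00. Qed.

Lemma P1 y n : P y 1 n = 2 * y * (INR n + 1).
Proof.
  unfold P. simpl sum_f_R0. rewrite (tF y 1 0 0 n) by lia. rewrite (tZ y 1 n 1) by lia.
  unfold H. natnorm. rewrite ?fact_simpl. rewrite ?mult_INR, ?S_INR, ?plus_INR. simpl INR.
  field. nz.
Qed.

Definition G y N j := if (j <=? N)%nat then PI / 2 * P y (N - j) j else 0.
Definition Gm1 y N j := match j with O => 0 | S j' => G y N j' end.

Lemma G0 y j : G y 0 j = match j with O => PI / 2 | S _ => 0 end.
Proof. destruct j; unfold G; simpl; [rewrite P0; ring | reflexivity]. Qed.

Lemma Gle y N j : (j <= N)%nat -> G y N j = PI / 2 * P y (N - j) j.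
Proof. intros. unfold G. replace (j <=? N)%nat with true by (symmetry; apply Nat.leb_le; lia). reflexivity. Qed.
Lemma Ggt y N j : (N < j)%nat -> G y N j = 0.
Proof. intros. unfold G. replace (j <=? N)%nat with false by (symmetry; apply Nat.leb_gt; lia). reflexivity. Qed.

Lemma G1 y j : G y 1 j = 2 * y * G y 0 j + G y 0 (S j) + Gm1 y 0 j.
Proof.
  destruct j as [|[|j]]; unfold Gm1.
  - rewrite !Gle by lia. rewrite (Ggt y 0 1) by lia. simpl Nat.sub. rewrite P1, P0. simpl INR. ring.
  - rewrite !Gle by lia. rewrite (Ggt y 0 1), (Ggt y 0 2) by lia. simpl Nat.sub. rewrite !P0, G0. ring.
  - rewrite !Ggt by lia. ring.
Qed.

Lemma G2 y N j : G y (S (S N)) j = 2 * y * G y (S N) j + G y (S N) (S j) + Gm1 y (S N) j - G y N j.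
Proof.
  destruct (le_lt_dec j N) as [H1|H1].
  - rewrite !Gle by lia.
    replace (S (S N) - j)%nat with (S (S (N - j))) by lia.
    replace (S N - j)%nat with (S (N - j)) by lia.
    replace (S N - S j)%nat with (N - j)%nat by lia.
    rewrite P2. destruct j as [|j']; unfold Gm1.
    + ring.
    + rewrite Gle by lia. replace (S N - j')%nat with (S (S (N - S j'))) by lia. ring.
  - destruct (Nat.eq_dec j (S N)) as [->|H2].
    + rewrite !Gle by lia. rewrite (Ggt y (S N)), (Ggt y N) by lia. unfold Gm1. rewrite Gle by lia.
      replace (S (S N) - S N)%nat with 1%nat by lia. replace (S N - S N)%nat with 0%nat by lia.
      replace (S N - N)%nat with 1%nat by lia. rewrite !P1, P0. rewrite S_INR. ring.
    + destruct (Nat.eq_dec j (S (S N))) as [->|H3].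
      * rewrite Gle by lia. rewrite !Ggt by lia. unfold Gm1. rewrite Gle by lia.
        rewrite !Nat.sub_diag, !P0. ring.
      * rewrite !Ggt by lia. destruct j as [|j']; [lia|]. unfold Gm1. rewrite Ggt by lia. ring.
Qed.

Definition J y N j := RInt (fun x => chebU j x * chebU N (x + y) * sqrt (1 - x ^ 2)) (-1) 1.
Definition JM y N j := match j with O => 0 | S j' => J y N j' end.
Definition Um1 j x := match j with O => 0 | S j' => chebU j' x end.

Lemma Um1_cont j x : continuous (Um1 j) x.
Proof. destruct j; simpl. apply cconst. apply chebU_cont. Qed.

Lemma shift_cont N y x : continuous (fun x => chebU N (x + y)) x.
Proof.
  apply (continuous_comp (fun x => x + y) (chebU N)). apply cplus. apply cid. apply cconst.
  apply chebU_cont.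
Qed.

Lemma exI (f : R -> R) N y : (forall x, continuous f x) ->
  ex_RInt (fun x => f x * chebU N (x + y) * sqrt (1 - x ^ 2)) (-1) 1.
Proof.
  intros Hf. apply (@ex_RInt_continuous R_CompleteNormedModule). intros z _.
  apply cmul. apply cmul. apply Hf. apply shift_cont. apply W_cont.
Qed.

Lemma RInt_lin a (f g h u : R -> R) lo hi :
  ex_RInt f lo hi -> ex_RInt g lo hi -> ex_RInt h lo hi -> ex_RInt u lo hi ->
  RInt (fun x => a * f x + g x + h x - u x) lo hi =
  a * RInt f lo hi + RInt g lo hi + RInt h lo hi - RInt u lo hi.
Proof.
  intros Hf Hg Hh Hu.
  pose proof (is_RInt_minus _ _ _ _ _ _
    (is_RInt_plus _ _ _ _ _ _
      (is_RInt_plus _ _ _ _ _ _ (is_RInt_scal f lo hi a _ (RInt_correct f lo hi Hf))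
         (RInt_correct g lo hi Hg)) (RInt_correct h lo hi Hh)) (RInt_correct u lo hi Hu)) as HH.
  exact (is_RInt_unique _ _ _ _ HH).
Qed.

Lemma RInt0 lo hi : RInt (fun _ => 0) lo hi = 0.
Proof. rewrite RInt_const. apply (@scal_zero_r R_Ring R_ModuleSpace). Qed.

Lemma xU j x : 2 * x * chebU j x = chebU (S j) x + Um1 j x.
Proof. destruct j. simpl. ring. rewrite chebU_SS. simpl Um1. ring. Qed.

Lemma JM_eq y N j : JM y N j = RInt (fun x => Um1 j x * chebU N (x + y) * sqrt (1 - x ^ 2)) (-1) 1.
Proof.
  destruct j; simpl.
  - symmetry. rewrite (RInt_ext _ (fun _ => 0)). apply RInt0. intros; req; ring.
  - reflexivity.
Qed.

Lemma Jrec2 y N j : J y (S (S N)) j = 2 * y * J y (S N) j + J y (S N) (S j) + JM y (S N) j - J y N j.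
Proof.
  rewrite JM_eq. unfold J at 1.
  rewrite (RInt_ext _ (fun x => 2 * y * (chebU j x * chebU (S N) (x + y) * sqrt (1 - x ^ 2))
       + chebU (S j) x * chebU (S N) (x + y) * sqrt (1 - x ^ 2)
       + Um1 j x * chebU (S N) (x + y) * sqrt (1 - x ^ 2)
       - chebU j x * chebU N (x + y) * sqrt (1 - x ^ 2))).
  2:{ intros x _. rewrite chebU_SS.
      replace (chebU j x * (2 * (x + y) * chebU (S N) (x + y) - chebU N (x + y)) * sqrt (1 - x ^ 2))
        with (2 * y * (chebU j x * chebU (S N) (x + y) * sqrt (1 - x ^ 2))
              + (2 * x * chebU j x) * chebU (S N) (x + y) * sqrt (1 - x ^ 2)
              - chebU j x * chebU N (x + y) * sqrt (1 - x ^ 2)) by ring.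
      rewrite xU. req. ring. }
  apply RInt_lin; apply exI; try apply chebU_cont; apply Um1_cont.
Qed.

Lemma Jrec1 y j : J y 1 j = 2 * y * J y 0 j + J y 0 (S j) + JM y 0 j.
Proof.
  rewrite JM_eq. unfold J at 1.
  rewrite (RInt_ext _ (fun x => 2 * y * (chebU j x * chebU 0 (x + y) * sqrt (1 - x ^ 2))
       + chebU (S j) x * chebU 0 (x + y) * sqrt (1 - x ^ 2)
       + Um1 j x * chebU 0 (x + y) * sqrt (1 - x ^ 2)
       - 0)).
  2:{ intros x _. req. change (chebU 0 (x + y)) with 1. change (chebU 1 (x + y)) with (2 * (x + y)).
      replace (chebU j x * (2 * (x + y)) * sqrt (1 - x ^ 2))
        with (2 * y * (chebU j x * 1 * sqrt (1 - x ^ 2))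
              + (2 * x * chebU j x) * 1 * sqrt (1 - x ^ 2) - 0) by ring.
      rewrite xU. req. ring. }
  rewrite (RInt_lin (2 * y) (fun x => chebU j x * chebU 0 (x + y) * sqrt (1 - x ^ 2))
     (fun x => chebU (S j) x * chebU 0 (x + y) * sqrt (1 - x ^ 2))
     (fun x => Um1 j x * chebU 0 (x + y) * sqrt (1 - x ^ 2)) (fun _ => 0)).
  - rewrite RInt0. unfold J. req. rewrite Rminus_0_r. reflexivity.
  - apply exI; apply chebU_cont.
  - apply exI; apply chebU_cont.
  - apply exI; apply Um1_cont.
  - apply (@ex_RInt_continuous R_CompleteNormedModule). intros; apply cconst.
Qed.

Lemma J0 y j : J y 0 j = match j with O => PI / 2 | S _ => 0 end.
Proof.
  unfold J. rewrite <- base_int. apply RInt_ext. intros. req. simpl chebU at 2. ring.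
Qed.

Lemma JG y N : (forall j, J y N j = G y N j) /\ (forall j, J y (S N) j = G y (S N) j).
Proof.
  induction N as [|N [IH1 IH2]].
  - assert (H0 : forall j, J y 0 j = G y 0 j) by (intros; rewrite J0, G0; reflexivity).
    split; auto. intros j. rewrite Jrec1, G1.
    destruct j; unfold JM, Gm1; rewrite !H0; reflexivity.
  - split; auto. intros j. rewrite Jrec2, G2.
    destruct j; unfold JM, Gm1; rewrite IH1, !IH2; reflexivity.
Qed.

Lemma L1 a k : poch (a / 2) k * poch ((a + 1) / 2) k * 4 ^ k = poch a (2 * k).
Proof.
  induction k.
  - simpl. ring.
  - replace (2 * S k)%nat with (S (S (2 * k))) by lia.
    cbn [poch pow]. rewrite <- IHk. rewrite S_INR, mult_INR. simpl INR. field.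
Qed.

Lemma L2 p k : (k <= p)%nat -> poch (- INR p) k * INR (fact (p - k)) = (-1) ^ k * INR (fact p).
Proof.
  induction k; intros Hk.
  - simpl. rewrite Nat.sub_0_r. ring.
  - assert (E : INR (fact (p - k)) = (INR p - INR k) * INR (fact (p - S k))).
    { replace (p - k)%nat with (S (p - S k)) by lia. rewrite fact_simpl, mult_INR.
      f_equal. rewrite S_INR, minus_INR by lia. rewrite S_INR. ring. }
    specialize (IHk ltac:(lia)). rewrite E in IHk.
    cbn [poch pow].
    replace (poch (- INR p) k * (- INR p + INR k) * INR (fact (p - S k)))
      with (- (poch (- INR p) k * ((INR p - INR k) * INR (fact (p - S k))))) by ring.
    rewrite IHk. ring.
Qed.

Lemma L3 n k : poch (INR n + 2) k * INR (fact (n + 1)) = INR (fact (n + k + 1)).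
Proof.
  induction k.
  - simpl. rewrite Nat.add_0_r. ring.
  - cbn [poch]. replace (n + S k + 1)%nat with (S (n + k + 1)) by lia.
    rewrite fact_simpl, mult_INR, <- IHk, S_INR, !plus_INR. simpl INR. ring.
Qed.

Lemma pow1_even k : (-1) ^ (2 * k) = 1.
Proof. rewrite pow_mult. replace ((-1) ^ 2) with 1 by ring. apply pow1. Qed.

Lemma sq_m1 k : (-1) ^ k * (-1) ^ k = 1.
Proof. rewrite <- pow_add. replace (k + k)%nat with (2 * k)%nat by lia. apply pow1_even. Qed.

Lemma term_hyp m n k y : (k <= term_index m)%nat ->
  PI * INR (fact (m + n)) / (INR (fact m) * INR (fact n)) * 2 ^ m / 2 *
  (hyp43_coef (- INR m / 2) ((1 - INR m) / 2) ((1 - INR m) / 2) ((2 - INR m) / 2)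
     (1 - INR m) (- INR m - INR n) (INR n + 2) k * 4 ^ k * y ^ (m - 2 * k))
  = PI / 2 * t y m n k.
Proof.
  intros Hk. unfold term_index in Hk.
  destruct m as [|m0].
  - simpl in Hk. replace k with 0%nat by lia. rewrite t00. unfold hyp43_coef. simpl.
    field. apply INR_fact_neq_0.
  - replace (S m0 - 1)%nat with m0 in Hk by lia.
    assert (Hd := Nat.div2_odd m0).
    assert (Hm : (2 * k + 1 <= S m0)%nat).
    { destruct (Nat.odd m0); simpl Nat.b2n in Hd; lia. }
    remember (S m0) as m eqn:Em.
    set (j := (m - (2 * k + 1))%nat).
    assert (Hmj : m = (2 * k + 1 + j)%nat) by (unfold j; lia).
    rewrite (tF y m j k n Hmj).
    pose proof (L1 (- INR m) k) as e1.
    replace ((- INR m + 1) / 2) with ((1 - INR m) / 2) in e1 by field.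
    pose proof (L1 (1 - INR m) k) as e2.
    replace ((1 - INR m + 1) / 2) with ((2 - INR m) / 2) in e2 by field.
    pose proof (L2 m (2 * k) ltac:(lia)) as e3. rewrite pow1_even in e3.
    pose proof (L2 (m - 1) (2 * k) ltac:(lia)) as e4. rewrite pow1_even in e4.
    rewrite minus_INR in e4 by lia. simpl (INR 1) in e4.
    replace (- (INR m - 1)) with (1 - INR m) in e4 by ring.
    pose proof (L2 (m - 1) k ltac:(lia)) as e5.
    rewrite minus_INR in e5 by lia. simpl (INR 1) in e5.
    replace (- (INR m - 1)) with (1 - INR m) in e5 by ring.
    pose proof (L2 (m + n) k ltac:(lia)) as e6.
    rewrite plus_INR in e6. replace (- (INR m + INR n)) with (- INR m - INR n) in e6 by ring.
    pose proof (L3 n k) as e7.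
    assert (F4 : 4 ^ k <> 0) by (apply pow_nonzero; lra).
    assert (eA : poch (- INR m / 2) k * poch ((1 - INR m) / 2) k * poch ((1 - INR m) / 2) k * poch ((2 - INR m) / 2) k
       = INR (fact m) / INR (fact (m - 2 * k)) / 4 ^ k * (INR (fact (m - 1)) / INR (fact (m - 1 - 2 * k))) / 4 ^ k).
    { pose proof (INR_fact_neq_0 (m - 2 * k)). pose proof (INR_fact_neq_0 (m - 1 - 2 * k)).
      replace (INR (fact m)) with (poch (- INR m) (2 * k) * INR (fact (m - 2 * k))) by lra.
      replace (INR (fact (m - 1))) with (poch (1 - INR m) (2 * k) * INR (fact (m - 1 - 2 * k))) by lra.
      rewrite <- e1, <- e2. field. auto. }
    assert (eB : poch (1 - INR m) k * poch (- INR m - INR n) k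
       = INR (fact (m - 1)) * INR (fact (m + n)) / (INR (fact (m - 1 - k)) * INR (fact (m + n - k)))).
    { pose proof (INR_fact_neq_0 (m - 1 - k)). pose proof (INR_fact_neq_0 (m + n - k)).
      apply (Rmult_eq_reg_r (INR (fact (m - 1 - k)) * INR (fact (m + n - k)))).
      2: apply Rmult_integral_contrapositive; auto.
      replace (poch (1 - INR m) k * poch (- INR m - INR n) k * (INR (fact (m - 1 - k)) * INR (fact (m + n - k))))
        with ((poch (1 - INR m) k * INR (fact (m - 1 - k))) * (poch (- INR m - INR n) k * INR (fact (m + n - k)))) by ring.
      rewrite e5, e6.
      replace ((-1) ^ k * INR (fact (m - 1)) * ((-1) ^ k * INR (fact (m + n))))
        with (((-1) ^ k * (-1) ^ k) * (INR (fact (m - 1)) * INR (fact (m + n)))) by ring.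
      rewrite sq_m1. field. split; auto. }
    assert (eC : poch (INR n + 2) k = INR (fact (n + k + 1)) / INR (fact (n + 1))).
    { rewrite <- e7. field. apply INR_fact_neq_0. }
    unfold hyp43_coef. rewrite eA, eB, eC.
    assert (e2m : 2 ^ m = 2 ^ (S j) * 4 ^ k).
    { rewrite Hmj. replace (2 * k + 1 + j)%nat with (S j + 2 * k)%nat by lia.
      rewrite pow_add, pow_mult. replace (2 ^ 2) with 4 by ring. reflexivity. }
    rewrite e2m.
    replace (m - 2 * k)%nat with (S j) by lia.
    replace (m - 1 - 2 * k)%nat with j by lia.
    replace (m - 1 - k)%nat with (k + j)%nat by lia.
    replace (m + n - k)%nat with (n + k + j + 1)%nat by lia.
    replace (fact m) with (m * fact (m - 1))%nat by (rewrite Em; simpl (S m0 - 1)%nat; rewrite Nat.sub_0_r; reflexivity).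
    assert (eF : INR (fact (n + 1)) = INR (n + 1) * INR (fact n)).
    { replace (n + 1)%nat with (S n) by lia. rewrite fact_simpl, mult_INR. reflexivity. }
    rewrite eF.
    unfold H. replace (j + 1)%nat with (S j) by lia. rewrite (fact_simpl j).
    rewrite !mult_INR. rewrite Rpow_mult_distr.
    assert (INR m <> 0) by (apply not_0_INR; lia).
    assert (INR (n + 1) <> 0) by (apply not_0_INR; lia).
    pose proof (pos_INR k). pose proof (pos_INR j).
    rewrite S_INR. req.
    field.
    repeat split; try apply INR_fact_neq_0; auto; try lra.
Qed.

Lemma sum_scal_l a f N : sum_f_R0 (fun k => a * f k) N = a * sum_f_R0 f N.
Proof. induction N; cbn [sum_f_R0]; [ring|]. rewrite IHN. ring. Qed.

Theorem theorem4 (m n : nat) (y : R) :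
  Rmn m n y =
  PI * INR (fact (m + n)) / (INR (fact m) * INR (fact n)) * 2 ^ m / 2 *
  ym_hyp43_poly m (term_index m)
    (- INR m / 2) ((1 - INR m) / 2) ((1 - INR m) / 2) ((2 - INR m) / 2)
    (1 - INR m) (- INR m - INR n) (INR n + 2) y.
Proof.
  assert (HR : Rmn m n y = J y (n + m) n) by reflexivity.
  rewrite HR. destruct (JG y (n + m)) as [HG _]. rewrite HG.
  rewrite Gle by lia. replace (n + m - n)%nat with m by lia.
  unfold ym_hyp43_poly. rewrite scal_sum.
  rewrite (sum_eq _ (fun k => PI / 2 * t y m n k)).
  2:{ intros k Hk. rewrite Rmult_comm. apply term_hyp. exact Hk. }
  rewrite sum_scal_l. f_equal.
  unfold P. apply sum_ext_zero.
  - unfold term_index. assert (Hd := Nat.div2_odd (m - 1)). destruct (Nat.odd (m - 1)); simpl Nat.b2n in Hd; lia.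
  - intros k Hk. apply tZ.
    + unfold term_index in Hk. assert (Hd := Nat.div2_odd (m - 1)).
      destruct (Nat.odd (m - 1)); simpl Nat.b2n in Hd; lia.
    + right. lia.
Qed.
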